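(* Let $X=(\vec x_i)_{i\ge1}$ be a sequence of nonzero points in $[0,1]^k$ and let $B\ge2$ be a constant. Define $\vec v_i:=B^{2^i}\vec x_i/\|\vec x_i\|_1$ for each $i$, and let $\mathcal{D}$ be the distribution that outputs $\vec v_i$ with probability $1/B^{2^i}$ for each $i$ and outputs $\vec 0$ with the remaining probability $1-\sum_{i\ge1}B^{-2^i}$. Then $\mathrm{ARev}(\mathcal{D})\le\mathrm{AlignGap}(X)+1/B$.
   Context: A mechanism $M$ is a set of options $(\vec q,p)$ with $\vec q\in[0,1]^k$, $p\in\mathbb{R}$, always containing the null option $(\vec 0,0)$; a buyer with values $\vec v\in\mathbb{R}^k_{\ge0}$ selects an option maximizing $\vec v\cdot\vec q-p$ (ties broken arbitrarily; a maximizer is assumed to exist), and $\vec q^M(\vec v),p^M(\vec v)$ denote the allocation and price of the selected option. $\mathrm{ARev}(\mathcal{D},M):=\mathbb{E}_{\vec v\sim\mathcal{D}}[p^M(\vec v)\cdot\mathbf 1(\vec v\text{ is parallel to }\vec q^M(\vec v))]$, $\mathrm{ARev}(\mathcal{D}):=\sup_M\mathrm{ARev}(\mathcal{D},M)$. AlignGap: For $X=(\vec x_i)_{i=1}^N$ a sequence of nonzero points in $[0,1]^k$, let $C=(c_i)_{i=0}^N$ be a sequence of reals with $c_0=0$ and $c_i\in[0,1/\|\vec x_i\|_\infty]$ for $i\ge1$; set $\vec x_0:=\vec 0$. Define $\mathrm{sgap}_i^{X,C}:=\min_{0\le j<i}\vec x_i\cdot(c_i\vec x_i-c_j\vec x_j)$,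 $\mathrm{AlignGap}(X,C):=\sum_{i=1}^N \max\{0,\mathrm{sgap}_i^{X,C}\}/\|\vec x_i\|_1$, and $\mathrm{AlignGap}(X):=\sup_C\mathrm{AlignGap}(X,C)$. *)

(* Defs.v *)
From HB Require Import structures.
From mathcomp Require Import all_boot all_order all_algebra.
From mathcomp Require Import all_classical all_reals all_analysis.
Set Implicit Arguments. Unset Strict Implicit. Unset Printing Implicit Defensive.
Import Order.TTheory GRing.Theory Num.Theory.
Local Open Scope classical_set_scope.
Local Open Scope ring_scope.

Section Defs.
Variables (R : realType) (k : nat).
Notation vec := 'rV[R]_k.

Definition dotv (u w : vec) : R := \sum_(j < k) u ord0 j * w ord0 j.
Definition norm1 (u : vec) : R := \sum_(j < k) `|u ord0 j|.
Definition normInf (u : vec) : R := \big[Num.max/0]_(j < k) `|u ord0 j|.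

Definition parallel (u w : vec) : Prop :=
  exists a : R, u = a *: w \/ w = a *: u.

Definition option_t := (vec * R)%type.

Definition is_mechanism (M : set option_t) : Prop :=
  M (0, 0) /\ (forall o, M o -> forall j, 0 <= o.1 ord0 j <= 1).

Definition utility (v : vec) (o : option_t) : R := dotv v o.1 - o.2.

Definition is_selection (M : set option_t) (sel : vec -> option_t) : Prop :=
  forall v, M (sel v) /\ (forall o, M o -> utility v o <= utility v (sel v)).

Definition aligned_rev (sel : vec -> option_t) (v : vec) : R :=
  if `[< parallel v (sel v).1 >] then (sel v).2 else 0.

Definition atom_prob (B : R) (i : nat) : R := (B ^+ (2 ^ i))^-1.
Definition atom (B : R) (X : nat -> vec) (i : nat) : vec :=
  (B ^+ (2 ^ i) / norm1 (X i)) *: X i.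
Definition zero_prob (B : R) : R :=
  1 - fine (\sum_(1 <= i <oo) (atom_prob B i)%:E)%E.

(* expectation of g : vec -> R under D (Lebesgue expectation of the discrete
   distribution, written as E[g^+] - E[g^-]) *)
Definition expectD (B : R) (X : nat -> vec) (g : vec -> R) : \bar R :=
  ((\sum_(1 <= i <oo) (atom_prob B i * Num.max 0 (g (atom B X i)))%:E)
   - (\sum_(1 <= i <oo) (atom_prob B i * Num.max 0 (- g (atom B X i)))%:E)
   + (zero_prob B * g 0)%:E)%E.

Definition ARev_sel (B : R) (X : nat -> vec) (sel : vec -> option_t) : \bar R :=
  expectD B X (aligned_rev sel).

Definition ARev (B : R) (X : nat -> vec) : \bar R :=
  ereal_sup [set ARev_sel B X sel | sel in
     [set sel | exists M, is_mechanism M /\ is_selection M sel]].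

Definition xseq (X : nat -> vec) (i : nat) : vec := if i is 0 then 0 else X i.

Definition admissibleC (X : nat -> vec) (C : nat -> R) : Prop :=
  C 0 = 0 /\ forall i, (0 < i)%N -> 0 <= C i <= (normInf (X i))^-1.

Definition sgap (X : nat -> vec) (C : nat -> R) (i : nat) : R :=
  let t j := dotv (xseq X i) (C i *: xseq X i - C j *: xseq X j) in
  \big[Num.min/t 0%N]_(0 <= j < i) t j.

Definition AlignGapC (X : nat -> vec) (C : nat -> R) : \bar R :=
  (\sum_(1 <= i <oo) (Num.max 0 (sgap X C i) / norm1 (X i))%:E)%E.

Definition AlignGap (X : nat -> vec) : \bar R :=
  ereal_sup [set AlignGapC X C | C in admissibleC X].

End Defs.

(* Main.v *)
Require Import Defs.
From HB Require Import structures.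
From mathcomp Require Import all_boot all_order all_algebra.
From mathcomp Require Import all_classical all_reals all_analysis.
From mathcomp Require Import lra zify.
From Stdlib Require Import Lia.
Import Order.TTheory GRing.Theory Num.Theory.
Local Open Scope ring_scope.

Section H.
Variables (R : realType) (k : nat).
Implicit Types (u w : 'rV[R]_k).

Lemma dotvZl a u w : dotv (a *: u) w = a * dotv u w.
Proof. rewrite /dotv mulr_sumr; apply: eq_bigr => j _; by rewrite mxE mulrA. Qed.
Lemma dotvZr a u w : dotv u (a *: w) = a * dotv u w.
Proof. rewrite /dotv mulr_sumr; apply: eq_bigr => j _; by rewrite mxE mulrCA. Qed.
Lemma dotvB u w z : dotv u (w - z) = dotv u w - dotv u z.
Proof. rewrite /dotv -sumrB; apply: eq_bigr => j _; by rewrite !mxE mulrBr. Qed.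
Lemma dotv0r u : dotv u 0 = 0.
Proof. rewrite /dotv big1 // => j _; by rewrite mxE mulr0. Qed.
Lemma dotv0l u : dotv 0 u = 0.
Proof. rewrite /dotv big1 // => j _; by rewrite mxE mul0r. Qed.

Lemma nz_entry u : u != 0 -> exists j, u ord0 j != 0.
Proof.
move=> /eqP hu; apply/not_existsP => hall; apply: hu; apply/rowP => j.
rewrite mxE; have := hall j; by case: eqP.
Qed.

Lemma series_le (f : nat -> R) (c : R) :
  (forall i, 0 <= f i) -> (forall n, \sum_(1 <= i < n) f i <= c) ->
  (\sum_(1 <= i <oo) (f i)%:E <= c%:E)%E.
Proof.
move=> f0 hs; apply: lime_le.
  by apply: is_cvg_nneseries => n _ _; rewrite lee_fin.
by near=> n; rewrite sumEFin lee_fin.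
Unshelve. all: by end_near.
Qed.

Lemma geo_sum n : \sum_(1 <= i < n.+1) ((2:R) ^+ i)^-1 = 1 - ((2:R) ^+ n)^-1.
Proof.
elim: n => [|n IH]; first by rewrite big_geq // expr0 invr1 subrr.
rewrite big_nat_recr //= IH exprS invfM.
set y := ((2:R) ^+ n)^-1; lra.
Qed.

Lemma geo_le n : \sum_(1 <= i < n) ((2:R) ^+ i)^-1 <= 1.
Proof.
case: n => [|n]; first by rewrite big_geq.
rewrite geo_sum; have : 0 <= ((2:R) ^+ n)^-1 by rewrite invr_ge0 exprn_ge0.
lra.
Qed.

Lemma pow2_ge (n : nat) : (n < 2 ^ n)%N.
Proof. elim: n => // n IH; rewrite expnS; lia. Qed.

Lemma powB_ge (B : R) (m : nat) : 2 <= B -> B * 2 ^+ m <= 2 * B ^+ m.+1.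
Proof.
move=> hB; rewrite exprS mulrCA ler_pM2l; last lra.
have h : (2:R) ^+ m <= B ^+ m by apply: lerXn2r; rewrite ?nnegrE; lra.
have : 0 <= (2:R) ^+ m by apply: exprn_ge0.
have : B <= 2 * B by lra.
nra.
Qed.

Lemma ratio_le (B : R) (i j : nat) : 2 <= B -> (j < i)%N ->
  B ^+ (2 ^ j) * (B ^+ (2 ^ i))^-1 <= (2 / B) * ((2:R) ^+ i)^-1.
Proof.
move=> hB hji.
have B0 : 0 < B by lra.
case: i hji => [|i] hji; first lia.
have hm : (i.+1 <= 2 ^ i.+1 - 2 ^ j)%N.
  have : (2 ^ j <= 2 ^ i)%N by rewrite leq_exp2l //; lia.
  have : (2 ^ i.+1 = 2 * 2 ^ i)%N by rewrite expnS.
  have := pow2_ge i; lia.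
have -> : (2 ^ i.+1 = 2 ^ j + (2 ^ i.+1 - 2 ^ j))%N.
  by rewrite subnKC // leq_exp2l //; lia.
move: hm; set m := (2 ^ i.+1 - 2 ^ j)%N => hm.
rewrite exprD invfM mulrA mulfV ?expf_neq0 ?gt_eqF // mul1r.
have Bm0 : 0 < B ^+ m by apply: exprn_gt0.
have t0 : 0 < (2:R) ^+ i.+1 by apply: exprn_gt0.
rewrite ler_pdivlMr // ler_pdivlMr // -mulrA ler_pdivrMl //.
rewrite mulrC; apply: (@le_trans _ _ (2 * B ^+ i.+1)).
  rewrite !exprS.
  have h : (2:R) ^+ i <= B ^+ i by apply: lerXn2r; rewrite ?nnegrE; lra.
  have : 0 <= (2:R) ^+ i by apply: exprn_ge0.
  nra.
rewrite [X in _ <= X]mulrC ler_pM2l; last lra.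
by apply: ler_weXn2l; first lra.
Qed.

Lemma esum_le (B : R) n : 2 <= B ->
  \sum_(1 <= i < n) (if (1 < i)%N then (2 / B) * ((2:R) ^+ i)^-1 else 0) <= B^-1.
Proof.
move=> hB.
have B0 : 0 < B by lra.
case: n => [|n]; first by rewrite big_geq // invr_ge0; lra.
case: n => [|n]; first by rewrite big_geq // invr_ge0; lra.
rewrite big_ltn // /= add0r.
rewrite (eq_big_nat _ _ (F2 := fun i => (2 / B) * ((2:R) ^+ i)^-1)); last first.
  by move=> i /andP [h _]; rewrite h.
rewrite -mulr_sumr.
have h1 := geo_sum n.+1.
rewrite big_ltn // expr1 in h1.
have hp : 0 <= ((2:R) ^+ n.+1)^-1 by rewrite invr_ge0 exprn_ge0.
have hs : \sum_(2 <= i < n.+2) ((2:R) ^+ i)^-1 <= 2^-1 by lra.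
move: hs; set S := \sum_(2 <= i < n.+2) _ => hs.
rewrite mulrAC ler_pdivrMr // -ler_pdivlMl; last lra.
by rewrite mulVf ?mulr1 //; lra.
Qed.
End H.

Lemma arith (R : realType) (b n p t o2 e : R) : 0 < b -> 0 < n ->
  p <= b / n * t + o2 -> b^-1 * o2 <= e -> (b^-1 * p - e) * n <= t.
Proof.
move=> b0 n0 h1 h2.
have h3 : b^-1 * p <= n^-1 * t + b^-1 * o2.
  have bi : 0 <= b^-1 by rewrite invr_ge0 ltW.
  have := ler_wpM2l bi h1.
  by rewrite mulrDr mulrA mulrA mulVf ?gt_eqF // mul1r.
have h4 : b^-1 * p - e <= n^-1 * t by lra.
by rewrite -(ler_pdivlMr _ _ n0) [t / n]mulrC.
Qed.

Section Main.
Variables (R : realType) (k : nat) (X : nat -> 'rV[R]_k) (B : R).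
Hypothesis hX : forall i, (0 < i)%N -> X i != 0 /\ (forall j, 0 <= X i ord0 j <= 1).
Hypothesis hB : 2 <= B.
Variables (M : set (option_t R k)) (sel : 'rV[R]_k -> option_t R k).
Hypothesis hM : is_mechanism M.
Hypothesis hsel : is_selection M sel.

Definition o i := sel (atom B X i).
Definition q i := (o i).1.
Definition p i := (o i).2.
Definition nx i := norm1 (X i).
Definition Pd i := (0 < i)%N /\ parallel (atom B X i) (q i).
Definition C i := if `[< Pd i >] then dotv (q i) (X i) / dotv (X i) (X i) else 0.
Definition e i : R := if (1 < i)%N then (2 / B) * ((2:R) ^+ i)^-1 else 0.

Lemma B0 : 0 < B. Proof. have := hB; lra. Qed.

Lemma p_le v : (sel v).2 <= dotv v (sel v).1.
Proof.
have [_ h] := hsel v; have := h _ hM.1.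
by rewrite /utility /= dotv0r subr0 subr_ge0.
Qed.

Lemma q_range v j : 0 <= (sel v).1 ord0 j <= 1.
Proof. exact: hM.2 _ (hsel v).1 j. Qed.

Lemma norm1E i : (0 < i)%N -> nx i = \sum_(j < k) X i ord0 j.
Proof.
move=> i0; apply: eq_bigr => j _; rewrite ger0_norm //.
by have [_ /(_ j) /andP[]] := hX _ i0.
Qed.

Lemma nx_pos i : (0 < i)%N -> 0 < nx i.
Proof.
move=> i0; have [hx hr] := hX _ i0; have [j hj] := @nz_entry _ _ _ hx.
rewrite /nx /norm1 (bigD1 j) //=.
have : 0 <= \sum_(i0 < k | i0 != j) `|X i ord0 i0| by apply: sumr_ge0.
have : 0 < `|X i ord0 j| by rewrite normr_gt0.
lra.
Qed.

Lemma dxx_pos i : (0 < i)%N -> 0 < dotv (X i) (X i).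
Proof.
move=> i0; have [hx hr] := hX _ i0; have [j hj] := @nz_entry _ _ _ hx.
rewrite /dotv (bigD1 j) //=.
have : 0 <= \sum_(i0 < k | i0 != j) X i ord0 i0 * X i ord0 i0.
  by apply: sumr_ge0 => l _; apply: mulr_ge0; have /andP[] := hr l.
have : 0 < X i ord0 j * X i ord0 j by rewrite -expr2 exprn_even_gt0.
lra.
Qed.

Lemma dot_le i (w : 'rV[R]_k) : (0 < i)%N -> (forall j, 0 <= w ord0 j <= 1) ->
  dotv (X i) w <= nx i.
Proof.
move=> i0 hw; rewrite norm1E //; apply: ler_sum => j _.
have [_ /(_ j) /andP [h1 h2]] := hX _ i0; have /andP [h3 h4] := hw j.
nra.
Qed.

Lemma atom_prob_ge0 i : 0 <= atom_prob B i.
Proof. by rewrite /atom_prob invr_ge0 exprn_ge0 // ltW // B0. Qed.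

Lemma p_bound i : (0 < i)%N -> p i <= B ^+ (2 ^ i).
Proof.
move=> i0; apply: (le_trans (p_le _)); rewrite /atom dotvZl.
have n0 := nx_pos _ i0.
have h := @dot_le i _ i0 (q_range (atom B X i)).
have s0 : 0 <= B ^+ (2 ^ i) / norm1 (X i).
  by apply: divr_ge0; [apply: exprn_ge0; apply: ltW; exact: B0 | exact: ltW].
apply: (le_trans (ler_wpM2l s0 h)).
by rewrite /nx divfK ?gt_eqF.
Qed.


Lemma xseqE i : (0 < i)%N -> xseq X i = X i.
Proof. by case: i. Qed.

Lemma normInf_ge0 (u : 'rV[R]_k) : 0 <= normInf u.
Proof. exact: bigmax_ge_id. Qed.

Lemma key i : Pd i -> q i = C i *: X i /\ 0 <= C i <= (normInf (X i))^-1.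
Proof.
move=> hP; have [i0 hpar] := hP.
have [hx hr] := hX _ i0.
have n0 := nx_pos _ i0.
set s := B ^+ (2 ^ i) / nx i.
have s0 : 0 < s by apply: divr_gt0 => //; apply: exprn_gt0; exact: B0.
have hv : atom B X i = s *: X i by [].
have [c hc] : exists c, q i = c *: X i.
  case: hpar => a [h|h].
  - have a0 : a != 0.
      apply/eqP => a0; move: h; rewrite a0 scale0r hv => /eqP.
      by rewrite scaler_eq0 (negbTE hx) gt_eqF.
    exists (a^-1 * s); by rewrite -scalerA -hv h scalerA mulVf // scale1r.
  - by exists (a * s); rewrite h hv scalerA.
have hC : C i = c.
  rewrite /C asboolT // hc dotvZl mulfK // gt_eqF //; exact: dxx_pos _ i0.
rewrite hC; split => //.
have [j hj] := @nz_entry _ _ _ hx.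
have xj : 0 < X i ord0 j by have /andP[h1 _] := hr j; rewrite lt_neqAle eq_sym hj h1.
have qr := q_range (atom B X i).
have c0 : 0 <= c.
  have /andP [h1 _] := qr j; move: h1; rewrite -/(o i) -/(q i) hc mxE => h1.
  nra.
rewrite c0 /=.
have N0 : 0 < normInf (X i).
  apply: (lt_le_trans _ (le_bigmax _ _ j)); by rewrite normr_gt0.
have [->|cpos] := eqVneq c 0; first by rewrite invr_ge0 ltW.
have cp : 0 < c by rewrite lt_neqAle eq_sym cpos c0.
have hN : normInf (X i) <= c^-1.
  apply: bigmax_le; first by rewrite invr_ge0.
  move=> l _; have /andP [h1 h2] := qr l; move: h2; rewrite -/(o i) -/(q i) hc mxE.
  have /andP [h3 _] := hr l; rewrite ger0_norm // => h2.
  by rewrite -[c^-1]mulr1 ler_pdivlMl // mulr1.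
rewrite -[_^-1]div1r ler_pdivlMr //.
have := ler_wpM2l (ltW cp) hN; by rewrite mulfV ?gt_eqF.
Qed.


Lemma admC : admissibleC X C.
Proof.
split; first by rewrite /C asboolF // => -[].
move=> i i0; case: (pselect (Pd i)) => h; first by have [_ ->] := key _ h.
by rewrite /C asboolF // lexx invr_ge0 normInf_ge0.
Qed.

Lemma e_ge0 i : 0 <= e i.
Proof.
rewrite /e; case: ifP => // _; apply: mulr_ge0; last by rewrite invr_ge0 exprn_ge0.
by apply: divr_ge0 => //; apply: ltW; exact: B0.
Qed.

Lemma term_bound i : (0 < i)%N ->
  atom_prob B i * Num.max 0 (aligned_rev sel (atom B X i))
  <= Num.max 0 (sgap X C i) / nx i + e i.
Proof.
move=> i0.
have n0 := nx_pos _ i0.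
have e0 := e_ge0 i.
have g0 : 0 <= Num.max 0 (sgap X C i) / nx i.
  by apply: divr_ge0; [rewrite le_max lexx | exact: ltW].
rewrite /aligned_rev.
case: (pselect (parallel (atom B X i) (sel (atom B X i)).1)) => hpar; last first.
  by rewrite asboolF // maxxx mulr0 addr_ge0.
rewrite asboolT // -/(o i) -/(p i).
case: (leP (p i) 0) => hp.
  by rewrite mulr0 addr_ge0.
have hPi : Pd i by split.
have [hqi _] := key _ hPi.
set K := (atom_prob B i * p i - e i) * nx i.
have hj : forall j, (j < i)%N ->
    K <= dotv (xseq X i) (C i *: xseq X i - C j *: xseq X j).
  move=> j hji.
  pose o' := if `[< Pd j >] then o j else (0, 0).
  have Mo' : M o'.
    rewrite /o'; case: ifP => _; [exact: (hsel _).1 | exact: hM.1].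
  have o'1 : o'.1 = C j *: xseq X j.
    rewrite /o'; case: (pselect (Pd j)) => hPj.
      rewrite asboolT //; have [hq _] := key _ hPj; rewrite xseqE; [exact: hq | by case: hPj].
    by rewrite asboolF // /C asboolF // scale0r.
  have o'2 : atom_prob B i * o'.2 <= e i.
    rewrite /o'; case: (pselect (Pd j)) => hPj; last by rewrite asboolF //= mulr0.
    rewrite asboolT //=; have j0 := hPj.1.
    have i1 : (1 < i)%N by apply: leq_trans hji.
    rewrite /e i1.
    apply: le_trans (_ : atom_prob B i * B ^+ (2 ^ j) <= _).
      apply: ler_wpM2l; [exact: atom_prob_ge0 | exact: p_bound].
    rewrite /atom_prob mulrC; apply: ratio_le => //; exact: hB.
  have := (hsel (atom B X i)).2 o' Mo'.
  rewrite /utility -/(o i) -/(q i) -/(p i) /atom !dotvZl -/(nx i) => hic.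
  rewrite xseqE // -hqi -o'1 dotvB.
  have b0 : 0 < B ^+ (2 ^ i) by apply: exprn_gt0; exact: B0.
  rewrite /K /atom_prob; apply: (@arith R (B ^+ (2 ^ i)) (nx i) (p i) _ o'.2 (e i)) => //.
  rewrite mulrBr; move: hic.
  set u1 := _ * dotv (X i) o'.1; set u2 := _ * dotv (X i) (q i).
  lra.
have hK : K <= sgap X C i.
  rewrite /sgap big_nat_cond.
  apply: (big_ind (fun m => K <= m)).
  - exact: hj.
  - by move=> x y hx hy; rewrite le_min hx hy.
  - by move=> j /andP [/andP [_ hji] _]; exact: hj.
have : atom_prob B i * p i - e i <= sgap X C i / nx i by rewrite ler_pdivlMr.
have : sgap X C i / nx i <= Num.max 0 (sgap X C i) / nx i.
  by rewrite ler_pM2r ?invr_gt0 // le_max lexx orbT.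
lra.
Qed.


Lemma zero_term : zero_prob B * aligned_rev sel 0 <= 0.
Proof.
have hz : 0 <= zero_prob B.
  rewrite /zero_prob subr_ge0.
  have S1 : (\sum_(1 <= i <oo) (atom_prob B i)%:E <= 1%:E)%E.
    apply: series_le; first exact: atom_prob_ge0.
    move=> n; apply: le_trans (geo_le R n); apply: ler_sum => i _.
    rewrite /atom_prob lef_pV2 ?posrE ?exprn_gt0 //; last exact: B0.
    apply: (@le_trans _ _ (B ^+ i)).
      by apply: lerXn2r; rewrite ?nnegrE //; have := hB; lra.
    apply: ler_weXn2l; first by have := hB; lra.
    exact: ltnW (pow2_ge i).
  have S0 : (0 <= \sum_(1 <= i <oo) (atom_prob B i)%:E)%E.
    by apply: nneseries_ge0 => n _ _; rewrite lee_fin atom_prob_ge0.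
  move: S0 S1; case: (\sum_(1 <= i <oo) (atom_prob B i)%:E)%E => //.
have ha : aligned_rev sel 0 <= 0.
  rewrite /aligned_rev asboolT; last by exists 0; left; rewrite scale0r.
  by apply: (le_trans (p_le 0)); rewrite dotv0l.
by rewrite mulr_ge0_le0.
Qed.

Lemma main_sel : (ARev_sel B X sel <= AlignGap X + (B^-1)%:E)%E.
Proof.
rewrite /ARev_sel /expectD.
set Sp := (\sum_(1 <= i <oo) _)%E.
set Sn := (\sum_(1 <= i <oo) _)%E.
have Sn0 : (0 <= Sn)%E.
  apply: nneseries_ge0 => n _ _; rewrite lee_fin.
  by apply: mulr_ge0; [exact: atom_prob_ge0 | rewrite le_max lexx].
apply: (@le_trans _ _ (Sp - Sn)%E).
  by apply: geeDl; rewrite lee_fin zero_term.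
apply: (@le_trans _ _ Sp).
  by rewrite -[leRHS]sube0; apply: leeB.
apply: (@le_trans _ _ (AlignGapC X C + (B^-1)%:E)%E); last first.
  by apply: leeD2r; apply: ereal_sup_ubound; exists C => //; exact: admC.
have h1 : (Sp <= \sum_(1 <= i <oo) ((Num.max 0 (sgap X C i) / nx i)%:E + (e i)%:E))%E.
  rewrite /Sp eseries_cond [leRHS]eseries_cond; apply: lee_nneseries.
    move=> n _ /= n0; rewrite lee_fin.
    by apply: mulr_ge0; [exact: atom_prob_ge0 | rewrite le_max lexx].
  by move=> n /= n0; rewrite -EFinD lee_fin; apply: term_bound.
apply: (le_trans h1); rewrite nneseriesD; last 2 first.
- move=> n n0 _; rewrite lee_fin; apply: divr_ge0; first by rewrite le_max lexx.
  exact/ltW/nx_pos.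
- by move=> n _ _; rewrite lee_fin e_ge0.
apply: leeD2l; apply: series_le; first exact: e_ge0.
move=> n; exact: esum_le.
Qed.

End Main.

Theorem propositionC1 (R : realType) (k : nat) (X : nat -> 'rV[R]_k) (B : R)
  (hX : forall i, (0 < i)%N -> X i != 0 /\ (forall j, 0 <= X i ord0 j <= 1))
  (hB : 2 <= B) :
  (ARev B X <= AlignGap X + (B^-1)%:E)%E.
Proof.
apply: ub_ereal_sup => _ [sel [M [hM hsel]] <-].
exact: (@main_sel R k X B hX hB M sel hM hsel).
Qed.
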